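(* Let $(C,D)$ define an irreducible MSPP with $C=-\mathrm{diag}(c_1,\dots,c_p)$, $c_i>0$. Let $\kappa=\frac{\min_i c_i+\max_i c_i}{2}$ and $\gamma=\sqrt{(\min_i c_i)(\max_i c_i)}$. Then the squared coefficient of variation of the event-stationary inter-event time satisfies $$1\le c^2\le 2\frac{\kappa^2}{\gamma^2}-1 .$$
   Context: A Markovian arrival process (MAP) of order $p$ is specified by $p\times p$ real matrices $C$ and $D$ such that $D$ has nonnegative entries, $C$ has nonnegative off-diagonal entries, and $Q=C+D$ is the generator (row sums zero) of an irreducible continuous-time Markov chain on $\{1,\dots,p\}$; $C$ is assumed nonsingular. An MSPP is a MAP with $C$ diagonal. $\mathbf{1}$ is the all-ones column vector; $\boldsymbol{\pi}$ is the stationary distribution of $Q$; $\boldsymbol{\alpha}$ is the stationary distribution of $P=(-C)^{-1}D$. The event-stationary inter-event time $T_1^{\alpha}$ has $\mathbb{P}(T_1^{\alpha}>t)=\boldsymbol{\alpha}e^{Ct}\mathbf{1}$, and $c^2=\mathrm{Var}(T_1^{\alpha})/\mathbb{E}^2[T_1^{\alpha}]$, which satisfies $c^2+1=2\,\boldsymbol{\pi}C\mathbf{1}\,\boldsymbol{\pi}C^{-1}\mathbf{1}$. *)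

(* Defs.v *)
From HB Require Import structures.
From mathcomp Require Import all_boot all_order all_algebra.
Set Implicit Arguments. Unset Strict Implicit. Unset Printing Implicit Defensive.
Import Order.TTheory GRing.Theory Num.Theory.
Local Open Scope ring_scope.

Section MAPDefs.
Variable R : rcfType.
Variable n : nat.

Definition ones : 'cV[R]_n := const_mx 1.

Definition is_generator (Q : 'M[R]_n) : Prop :=
  (forall i j : 'I_n, i != j -> 0 <= Q i j) /\ Q *m ones = 0.

Definition irreducible_gen (Q : 'M[R]_n) : Prop :=
  forall i j : 'I_n, connect (fun k l : 'I_n => (k != l) && (0 < Q k l)) i j.

Definition is_MAP (C D : 'M[R]_n) : Prop :=
  (forall i j : 'I_n, 0 <= D i j) /\
  (forall i j : 'I_n, i != j -> 0 <= C i j) /\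
  is_generator (C + D) /\ irreducible_gen (C + D) /\ C \in unitmx.

Definition is_MSPP (C D : 'M[R]_n) : Prop :=
  is_MAP C D /\ is_diag_mx C.

Definition is_stationary_dist (P : 'M[R]_n) (v : 'rV[R]_n) : Prop :=
  v *m P = v /\ (forall i, 0 <= v 0 i) /\ \sum_i v 0 i = 1.

Definition embedded (C D : 'M[R]_n) : 'M[R]_n := invmx (- C) *m D.

(* moments of the phase-type inter-event time T with P(T>t) = alpha e^{Ct} 1:
   E[T] = alpha (-C)^{-1} 1,  E[T^2] = 2 alpha (-C)^{-2} 1 *)
Definition ET1 (alpha : 'rV[R]_n) (C : 'M[R]_n) : R :=
  (alpha *m invmx (- C) *m ones) 0 0.
Definition ET2 (alpha : 'rV[R]_n) (C : 'M[R]_n) : R :=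
  2 * (alpha *m invmx (- C) *m invmx (- C) *m ones) 0 0.

Definition scv (alpha : 'rV[R]_n) (C : 'M[R]_n) : R :=
  (ET2 alpha C - (ET1 alpha C) ^+ 2) / (ET1 alpha C) ^+ 2.

End MAPDefs.

(* Main.v *)
Require Import Defs.
From HB Require Import structures.
From mathcomp Require Import all_boot all_order all_algebra.
From mathcomp Require Import ring lra.
Import Order.TTheory GRing.Theory Num.Theory.
Local Open Scope ring_scope.

Lemma invmx_diag (R : fieldType) n (c : 'rV[R]_n) :
  (forall i, c 0 i != 0) ->
  invmx (diag_mx c) = diag_mx (\row_j (c 0 j)^-1).
Proof.
move=> cnz.
have H : diag_mx c *m diag_mx (\row_j (c 0 j)^-1) = 1%:M.
  apply/matrixP=> i j; rewrite mulmx_diag !mxE.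
  by case: (i =P j) => [->|_]; rewrite ?mulfV ?mulr0n ?mulr1n.
have U : diag_mx c \in unitmx.
  by case: (mulmx1_unit H).
by rewrite -[invmx _]mulmx1 -H mulmxA mulVmx // mul1mx.
Qed.

Theorem proposition4 (R : rcfType) (p : nat)
    (c : 'rV[R]_p.+1) (D : 'M[R]_p.+1) (alpha : 'rV[R]_p.+1) :
  (forall i, 0 < c 0 i) ->
  is_MSPP (- diag_mx c) D ->
  is_stationary_dist (embedded (- diag_mx c) D) alpha ->
  let cmin := \big[Num.min/c 0 0]_(i < p.+1) c 0 i in
  let cmax := \big[Num.max/c 0 0]_(i < p.+1) c 0 i in
  let kappa := (cmin + cmax) / 2 in
  let gamma := Num.sqrt (cmin * cmax) in
  1 <= scv alpha (- diag_mx c) <= 2 * kappa ^+ 2 / gamma ^+ 2 - 1.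
Proof.
move=> cpos _ [_ [a0 a1]]; cbv zeta.
set cmin := \big[Num.min/c 0 0]_(i < p.+1) c 0 i.
set cmax := \big[Num.max/c 0 0]_(i < p.+1) c 0 i.
have cnz i : c 0 i != 0 by rewrite gt_eqF.
have Inv : invmx (- - diag_mx c) = diag_mx (\row_j (c 0 j)^-1).
  by rewrite opprK invmx_diag.
set x := fun i => (c 0 i)^-1.
set mu := \sum_i alpha 0 i * x i.
set s2 := \sum_i alpha 0 i * (x i * x i).
have E1 : ET1 alpha (- diag_mx c) = mu.
  rewrite /ET1 Inv mul_mx_diag !mxE; apply: eq_bigr => i _.
  by rewrite !mxE mulr1.
have E2 : ET2 alpha (- diag_mx c) = 2 * s2.
  rewrite /ET2 Inv mul_mx_diag mul_mx_diag !mxE; congr (_ * _); apply: eq_bigr => i _.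
  by rewrite !mxE mulr1 mulrA.
have mleM : cmin <= cmax by apply: (le_trans (bigmin_le_id _ _ _ _)); apply: bigmax_ge_id.
have mpos : 0 < cmin.
  by apply: lt_bigmin => // i _; exact: cpos.
have Mpos : 0 < cmax by apply: lt_le_trans mleM.
have xlo i : cmax^-1 <= x i.
  by rewrite lef_pV2 ?posrE ?cpos // le_bigmax.
have xhi i : x i <= cmin^-1.
  by rewrite lef_pV2 ?posrE ?cpos // bigmin_le.
have xpos i : 0 < x i by rewrite invr_gt0.
have mupos : 0 < mu.
  have : cmax^-1 <= mu.
    rewrite -[cmax^-1]mul1r -a1 mulr_suml /mu; apply: ler_sum => i _.
    by rewrite ler_wpM2l.
  by apply: lt_le_trans; rewrite invr_gt0.
have CS : mu ^+ 2 <= s2.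
  have : 0 <= \sum_i alpha 0 i * ((x i - mu) * (x i - mu)).
    by apply: sumr_ge0 => i _; rewrite mulr_ge0 // -expr2 sqr_ge0.
  have -> : \sum_i alpha 0 i * ((x i - mu) * (x i - mu)) =
     s2 - 2 * mu * mu + mu * mu * \sum_i alpha 0 i.
    rewrite (eq_bigr (fun i => alpha 0 i * (x i * x i) - 2 * mu * (alpha 0 i * x i) + mu * mu * alpha 0 i)); last by move=> i _; ring.
    by rewrite big_split sumrB /= -!mulr_sumr.
  by rewrite a1; lra.
set A := cmax^-1. set B := cmin^-1.
have Kt : s2 <= (A + B) * mu - A * B.
  have : \sum_i alpha 0 i * ((x i - A) * (x i - B)) <= 0.
    apply: sumr_le0 => i _; apply: mulr_ge0_le0 => //.
    by apply: mulr_ge0_le0; rewrite ?subr_ge0 ?subr_le0.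
  have -> : \sum_i alpha 0 i * ((x i - A) * (x i - B)) =
     s2 - (A + B) * mu + A * B * \sum_i alpha 0 i.
    rewrite (eq_bigr (fun i => alpha 0 i * (x i * x i) - (A + B) * (alpha 0 i * x i) + A * B * alpha 0 i)); last by move=> i _; ring.
    by rewrite big_split sumrB /= -!mulr_sumr.
  by rewrite a1; lra.
have g2 : Num.sqrt (cmin * cmax) ^+ 2 = cmin * cmax by rewrite sqr_sqrtr // mulr_ge0 // ltW.
rewrite /scv E1 E2 g2.
have mu2 : 0 < mu ^+ 2 by rewrite exprn_gt0.
apply/andP; split.
  by rewrite ler_pdivlMr // mul1r; lra.
have Am : A * cmax = 1 by rewrite mulVf // gt_eqF.
have Bm : B * cmin = 1 by rewrite mulVf // gt_eqF.
have key : s2 * (4 * cmin * cmax) <= (cmin + cmax) ^+ 2 * mu ^+ 2.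
  have h1 : s2 * (4 * cmin * cmax) <= ((A + B) * mu - A * B) * (4 * cmin * cmax).
    by rewrite ler_wpM2r // ?mulr_ge0 // ltW.
  apply: (le_trans h1).
  have -> : ((A + B) * mu - A * B) * (4 * cmin * cmax) =
            4 * (cmin + cmax) * mu - 4.
    rewrite /A /B; field.
    by rewrite !gt_eqF.
  have : 0 <= ((cmin + cmax) * mu - 2) ^+ 2 by rewrite sqr_ge0.
  move=> h; rewrite -subr_ge0; apply: le_trans h _; rewrite le_eqVlt; apply/orP; left; apply/eqP; ring.
have pmM : 0 < cmin * cmax by rewrite mulr_gt0.
rewrite -subr_ge0.
have -> : 2 * ((cmin + cmax) / 2) ^+ 2 / (cmin * cmax) - 1 - (2 * s2 - mu ^+ 2) / mu ^+ 2
   = ((cmin + cmax) ^+ 2 * mu ^+ 2 - s2 * (4 * cmin * cmax)) / (2 * cmin * cmax * mu ^+ 2).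
  field.
  by rewrite !gt_eqF.
apply: divr_ge0; first by rewrite subr_ge0.
by rewrite !mulr_ge0 // ltW.
Qed.
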